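(* Let $\mathcal{A}$ be a finite totally ordered alphabet of size $n$. The monoid $\mathbf{Sylv}(\mathcal{A},2)$ contains exactly $\sum_{k=0}^n\binom{n}{k}S_k$ idempotents, where $(S_k)_{k\ge0}$ are the large Schröder numbers shifted by one: $S_0=S_1=1$, $S_2=2$, $S_3=6$, $S_4=22$, $\dots$ (i.e. $S_k$ is the $(k-1)$-th large Schröder number for $k\geq1$). Moreover, the idempotents are exactly the elements represented by the readings $\operatorname{R}(T)$ of the 2-reduced binary search trees $T$ such that, for every label $x$ occurring in $T$, the deepest node labelled $x$ in $T$ has no left subtree.
   Context: The sylvester monoid $\mathbf{Sylv}(\mathcal{A})$ is the quotient of the free monoid $\mathcal{A}^*$ by the relations $acWb=caWb$ for all $a,b,c\in\mathcal{A}$ with $a\le b<c$ and all $W\in\mathcal{A}^*$; $\mathbf{Sylv}(\mathcal{A},2)$ is its quotient by the additional relations $a^2=a$, $a\in\mathcal{A}$. A binary search tree $T=(L,r,R)$ is a binary tree with nodes labelled by $\mathcal{A}$ such that the label of each node is greater than or equal to all labels in its left subtree and strictly smaller than all labels in its right subtree. Its reading $\operatorname{R}(T)$ is the right-to-left postfix reading: $\operatorname{R}(\emptyset)$ is the empty word and $\operatorname{R}((L,r,R))=\operatorname{R}(R)\,\operatorname{R}(L)\,r$. A binary search tree is 2-reduced if no node has a left child carrying the same label as itself. *)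

(* Defs.v *)
From mathcomp Require Import all_boot.
Set Implicit Arguments. Unset Strict Implicit. Unset Printing Implicit Defensive.

(* The alphabet A of size n is 'I_n with its natural total order. *)

(** Two words are congruent iff they represent the same element of Sylv(A,2). *)
Inductive sylv2 (n : nat) : seq 'I_n -> seq 'I_n -> Prop :=
| sylv2_refl u : sylv2 u u
| sylv2_sym u v : sylv2 u v -> sylv2 v u
| sylv2_trans u v w : sylv2 u v -> sylv2 v w -> sylv2 u w
| sylv2_ctx p u v s : sylv2 u v -> sylv2 (p ++ u ++ s) (p ++ v ++ s)
| sylv2_rel (a b c : 'I_n) (W : seq 'I_n) :
    a <= b -> b < c ->
    sylv2 ([:: a; c] ++ W ++ [:: b]) ([:: c; a] ++ W ++ [:: b])
| sylv2_idem (a : 'I_n) : sylv2 [:: a; a] [:: a].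

Definition sylv2_idempotent n (w : seq 'I_n) : Prop := sylv2 (w ++ w) w.

Inductive btree (n : nat) : Type :=
| Leaf : btree n
| Node : btree n -> 'I_n -> btree n -> btree n.
Arguments Leaf {n}.

Fixpoint labels n (t : btree n) : seq 'I_n :=
  match t with
  | Leaf => [::]
  | Node l r rr => labels l ++ r :: labels rr
  end.

Fixpoint is_bst n (t : btree n) : bool :=
  match t with
  | Leaf => true
  | Node l r rr =>
      [&& all (fun x : 'I_n => x <= r) (labels l),
          all (fun x : 'I_n => r < x) (labels rr),
          is_bst l & is_bst rr]
  end.

Fixpoint reading n (t : btree n) : seq 'I_n :=
  match t with
  | Leaf => [::]
  | Node l r rr => reading rr ++ reading l ++ [:: r]
  end.

Fixpoint two_reduced n (t : btree n) : bool :=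
  match t with
  | Leaf => true
  | Node l r rr =>
      [&& (if l is Node _ x _ then x != r else true),
          two_reduced l & two_reduced rr]
  end.

Fixpoint nodes_info n (t : btree n) (d : nat) : seq ('I_n * nat * bool) :=
  match t with
  | Leaf => [::]
  | Node l r rr =>
      (r, d, if l is Leaf then true else false)
        :: nodes_info l d.+1 ++ nodes_info rr d.+1
  end.

Definition deepest_no_left n (t : btree n) : Prop :=
  forall x d b, (x, d, b) \in nodes_info t 0 ->
    (forall x' d' b', (x', d', b') \in nodes_info t 0 -> x' = x -> d' <= d) ->
    b = true.

(** Large Schröder numbers r_0 = 1, r_1 = 2, r_2 = 6, r_3 = 22, ... via
    r_m = r_(m-1) + sum_(k=0..m-1) r_k r_(m-1-k). *)
Fixpoint schroder_upto (m : nat) : seq nat :=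
  match m with
  | 0 => [:: 1]
  | m'.+1 =>
      let s := schroder_upto m' in
      rcons s (last 0 s + sumn [seq nth 0 s k * nth 0 s (m' - k) | k <- iota 0 m'.+1])
  end.
Definition large_schroder (m : nat) : nat := nth 0 (schroder_upto m) m.

Definition S_shift (k : nat) : nat :=
  if k is k'.+1 then large_schroder k' else 1.

Lemma S_shift_values :
  [:: S_shift 0; S_shift 1; S_shift 2; S_shift 3; S_shift 4; S_shift 5]
  = [:: 1; 1; 2; 6; 22; 90].
Proof. by []. Qed.

(* Main.v *)
From HB Require Import structures.
Require Import Defs.
From mathcomp Require Import all_boot.
Set Implicit Arguments. Unset Strict Implicit. Unset Printing Implicit Defensive.

Fixpoint ins2 {n} (x : 'I_n) (t : btree n) {struct t} : btree n :=
  match t with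
  | Leaf => Node Leaf x Leaf
  | Node l r rr =>
      if x <= r then
        (if (x == r) && (if l is Leaf then true else false) then t
         else Node (ins2 x l) r rr)
      else Node l r (ins2 x rr)
  end.

Definition NF {n} (w : seq 'I_n) : btree n := foldr ins2 Leaf w.

Definition isnode {n} (t : btree n) := if t is Leaf then false else true.

Lemma isnode_ins2 n (x : 'I_n) t : isnode (ins2 x t).
Proof. by case: t => //= l r rr; case: ifP => //; case: ifP. Qed.

Lemma ins2_nleaf n (x : 'I_n) t :
  (match ins2 x t with Leaf => true | Node _ _ _ => false end) = false.
Proof. by have := isnode_ins2 x t; case: (ins2 x t). Qed.

Lemma ins2_node_left n (x r : 'I_n) l rr : isnode l -> x <= r ->
  ins2 x (Node l r rr) = Node (ins2 x l) r rr.
Proof. by case: l => //= l1 y l2 _ ->; rewrite andbF. Qed.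

Lemma ins2_idem n (a : 'I_n) t : ins2 a (ins2 a t) = ins2 a t.
Proof.
elim: t => [|l IHl r rr IHr] /=; first by rewrite leqnn eqxx.
case: ifP => har.
  case: ifP => [/andP[/eqP har2 hl]|hs] /=; first by rewrite har har2 eqxx hl.
  by rewrite har ins2_nleaf andbF IHl.
by rewrite /= har IHr.
Qed.

Fixpoint found {n} (b : 'I_n) (t : btree n) : bool :=
  match t with
  | Leaf => false
  | Node l r rr => (b == r) || (if b <= r then found b l else found b rr)
  end.

Lemma found_ins2 n (b : 'I_n) t : found b (ins2 b t).
Proof.
elim: t => [|l IHl r rr IHr] /=; first by rewrite eqxx.
case: ifP => hbr.
  case: ifP => /= [/andP[/eqP -> _]|_]; first by rewrite eqxx.
  by rewrite /= hbr IHl orbT.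
by rewrite /= hbr IHr orbT.
Qed.

Lemma found_ins2_pres n (b x : 'I_n) t : found b t -> found b (ins2 x t).
Proof.
elim: t => [|l IHl r rr IHr] //= hf.
case: ifP => hxr; [case: ifP => // _|]; rewrite /=; move: hf;
  (case/orP => [->//|]); case: ifP => // _ h.
all: by rewrite ?(IHl h) ?(IHr h) ?h ?orbT.
Qed.

Lemma found_foldr n (b : 'I_n) t w : found b t -> found b (foldr ins2 t w).
Proof. by elim: w => //= x w IH /IH /found_ins2_pres. Qed.

Lemma ins2_diverge n (a c r : 'I_n) l rr : a <= r -> r < c ->
  ins2 a (ins2 c (Node l r rr)) = ins2 c (ins2 a (Node l r rr)).
Proof.
move=> har hrc /=.
have hcr : (c <= r) = false by apply/negbTE; rewrite -ltnNge.
rewrite hcr /= har.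
case: ifP => _ /=; by rewrite hcr.
Qed.

Lemma ins2_comm n (a b c : 'I_n) t : found b t -> a <= b -> b < c ->
  ins2 a (ins2 c t) = ins2 c (ins2 a t).
Proof.
move=> + hab hbc; elim: t => [|l IHl r rr IHr] // hf.
rewrite /= in hf; move: hf => /orP [/eqP hbr|].
  apply: ins2_diverge; by rewrite -hbr.
case: ifP => hbr hf.
  have hac : a <= r by apply: leq_trans hbr.
  case: (leqP c r) => hcr; last by apply: ins2_diverge.
  have hl : isnode l by move: hf; clear; case: l.
  by rewrite !ins2_node_left ?isnode_ins2 // IHl.
have hrb : r < b by rewrite ltnNge hbr.
have hrc : r < c by apply: ltn_trans hbc.
case: (leqP a r) => hra; first by apply: ins2_diverge.
have e1 : forall (x : 'I_n) s, r < x -> ins2 x (Node l r s) = Node l r (ins2 x s).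
  by move=> x s hx /=; rewrite leqNgt hx.
by rewrite !e1 // (IHr hf).
Qed.

Lemma NF_cat n (u v : seq 'I_n) : NF (u ++ v) = foldr ins2 (NF v) u.
Proof. by rewrite /NF foldr_cat. Qed.

Lemma sylv2_NF_gen n (u v : seq 'I_n) : sylv2 u v -> forall s, NF (u ++ s) = NF (v ++ s).
Proof.
move=> h; induction h as [u|u v h IH|u v w h1 IH1 h2 IH2|p u v s0 h IH|a b c W hab hbc|a].
- by [].
- by move=> s; rewrite IH.
- by move=> s; rewrite IH1 IH2.
- by move=> s; rewrite -!catA !(NF_cat p) !catA -!(catA u) -!(catA v) IH.
- move=> s; rewrite /NF /= !foldr_cat /=.
  apply: (ins2_comm (b := b)) => //.
  by apply: found_foldr; apply: found_ins2.
- by move=> s; rewrite /NF /= ins2_idem.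
Qed.

Lemma sylv2_NF n (u v : seq 'I_n) : sylv2 u v -> NF u = NF v.
Proof. by move=> h; have := sylv2_NF_gen h [::]; rewrite !cats0. Qed.

Fixpoint bteqb {n} (s t : btree n) : bool :=
  match s, t with
  | Leaf, Leaf => true
  | Node l r rr, Node l' r' rr' => [&& bteqb l l', r == r' & bteqb rr rr']
  | _, _ => false
  end.

Lemma bteqP n : Equality.axiom (@bteqb n).
Proof.
elim=> [|l IHl r rr IHr] [|l' r' rr'] /=; try by constructor.
case: (IHl l') => [->|h]; last by constructor; case.
case: (r =P r') => [->|h]; last by constructor; case.
case: (IHr rr') => [->|h]; last by constructor; case.
by constructor.
Qed.

HB.instance Definition _ n := hasDecEq.Build (btree n) (@bteqP n).

Lemma mem_labels_ins2 n (x y : 'I_n) t :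
  (y \in labels (ins2 x t)) = (y == x) || (y \in labels t).
Proof.
elim: t => [|l IHl r rr IHr] /=; first by rewrite inE orbF.
case: ifP => hxr.
  case: ifP => [/andP[/eqP -> _]|_] /=.
    by rewrite orb_idl // => /eqP ->; rewrite mem_cat inE eqxx orbT.
  rewrite !mem_cat !inE IHl.
  by case: (y == x); case: (y \in labels l); case: (y == r); case: (y \in labels rr).
rewrite !mem_cat !inE IHr.
by case: (y == x); case: (y \in labels l); case: (y == r); case: (y \in labels rr).
Qed.

Lemma mem_reading n (t : btree n) : reading t =i labels t.
Proof.
elim: t => [|l IHl r rr IHr] //= y.
rewrite !(mem_cat, inE) IHl IHr.
by case: (y \in labels l); case: (y \in labels rr); case: (y == r); rewrite ?orbT ?orbF.
Qed.

Lemma all_reading n (P : pred 'I_n) t : all P (reading t) = all P (labels t).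
Proof. exact: eq_all_r (mem_reading t) P. Qed.

Lemma bst_ins2 n (x : 'I_n) t : is_bst t -> is_bst (ins2 x t).
Proof.
elim: t => [|l IHl r rr IHr] //=.
case/and4P=> hl hr bl br.
case: ifP => hxr.
  case: ifP => [_|_] /=; first by rewrite hl hr bl br.
  apply/and4P; split => //; last by apply: IHl.
  apply/allP=> y; rewrite mem_labels_ins2 => /orP[/eqP ->//|hy].
  by move/allP: hl; apply.
apply/and4P; split => //; last by apply: IHr.
apply/allP=> y; rewrite mem_labels_ins2 => /orP[/eqP ->|hy].
  by rewrite ltnNge hxr.
by move/allP: hr; apply.
Qed.

Lemma tred_ins2 n (x : 'I_n) t : two_reduced t -> two_reduced (ins2 x t).
Proof.
elim: t => [|l IHl r rr IHr] //=.
case/and3P=> hl tl tr.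
case: ifP => hxr.
  case: ifP => [_|hs] /=; first by rewrite hl tl tr.
  rewrite tr IHl // andbT.
  move: hs hl; case: l {IHl tl} => [|l1 y l2] /=.
    by rewrite andbT => ->.
  by move=> _ hy; case: ifP => _; [case: ifP => _ |]; rewrite /= hy.
by apply/and3P; split => //; apply: IHr.
Qed.

Lemma NF_bst n (w : seq 'I_n) : is_bst (NF w).
Proof. by elim: w => //= x w IH; apply: bst_ins2. Qed.

Lemma NF_tred n (w : seq 'I_n) : two_reduced (NF w).
Proof. by elim: w => //= x w IH; apply: tred_ins2. Qed.

Lemma mem_NF n (w : seq 'I_n) : labels (NF w) =i w.
Proof. by elim: w => //= x w IH y; rewrite mem_labels_ins2 IH inE. Qed.

Lemma sylv2_pre n (p u v s : seq 'I_n) : sylv2 u v -> sylv2 (p ++ u ++ s) (p ++ v ++ s).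
Proof. exact: sylv2_ctx. Qed.

Lemma commute_past n (a b : 'I_n) cs W : a <= b -> all (fun c : 'I_n => b < c) cs ->
  sylv2 (a :: cs ++ W ++ [:: b]) (cs ++ a :: W ++ [:: b]).
Proof.
move=> hab; elim: cs => [|c cs IH] /=; first by move=> _; apply: sylv2_refl.
case/andP=> hbc hcs.
have h := sylv2_rel (cs ++ W) hab hbc; rewrite /= -catA in h.
apply: sylv2_trans h _.
have := sylv2_pre [:: c] [::] (IH hcs); rewrite !cats0 /=.
exact.
Qed.

Lemma sylv2_ins2 n (x : 'I_n) t : is_bst t -> sylv2 (x :: reading t) (reading (ins2 x t)).
Proof.
elim: t => [|l IHl r rr IHr] /=; first by move=> _; apply: sylv2_refl.
case/and4P=> hl hr bl br.
case: ifP => hxr.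
  have h1 := commute_past (reading l) hxr (etrans (all_reading _ rr) hr).
  apply: sylv2_trans h1 _.
  case: ifP => [/andP[/eqP exr hl0]|_] /=.
    move: hl0; case: l {IHl hl bl} => // _ /=; rewrite exr.
    have := sylv2_pre (reading rr) [::] (sylv2_idem r); rewrite cats0 /=.
    exact.
  have := sylv2_pre (reading rr) [:: r] (IHl bl); exact.
have := sylv2_pre [::] (reading l ++ [:: r]) (IHr br); exact.
Qed.

Lemma sylv2_NFr n (w : seq 'I_n) : sylv2 w (reading (NF w)).
Proof.
elim: w => [|x w IH] /=; first by apply: sylv2_refl.
apply: sylv2_trans (sylv2_ins2 x (NF_bst w)).
by have := sylv2_pre [:: x] [::] IH; rewrite !cats0.
Qed.

Lemma NF_eq_sylv2 n (u v : seq 'I_n) : NF u = NF v -> sylv2 u v.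
Proof.
move=> e; apply: sylv2_trans (sylv2_NFr u) _.
by rewrite e; apply: sylv2_sym; apply: sylv2_NFr.
Qed.

Lemma foldr_right n (r : 'I_n) L S w : all (fun x : 'I_n => r < x) w ->
  foldr ins2 (Node L r S) w = Node L r (foldr ins2 S w).
Proof.
elim: w => //= x w IH /andP[hx hw]; rewrite IH //=.
by rewrite leqNgt hx.
Qed.

Lemma foldr_left n (r : 'I_n) L S w : isnode L -> all (fun x : 'I_n => x <= r) w ->
  foldr ins2 (Node L r S) w = Node (foldr ins2 L w) r S.
Proof.
move=> hL; elim: w => //= x w IH /andP[hx hw]; rewrite IH //.
rewrite ins2_node_left //.
by case: w {IH hw} => //= y w; apply: isnode_ins2.
Qed.

Lemma NF_reading n (t : btree n) : is_bst t -> two_reduced t -> NF (reading t) = t.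
Proof.
elim: t => [|l IHl r rr IHr] //=.
case/and4P=> hl hr bl br /and3P[hroot tl tr].
rewrite /NF !foldr_cat /=.
have -> : foldr ins2 (Node Leaf r Leaf) (reading l) = Node l r Leaf.
  case: l IHl hl bl hroot tl => [|l1 y l2] IHl hl bl hroot tl //=.
  rewrite catA foldr_cat /=.
  move: hl; rewrite /= all_cat /= => /and3P[hl1 hyr hl2].
  rewrite hyr (negbTE hroot) /=.
  rewrite foldr_left //; last by rewrite all_cat !all_reading hl1 hl2.
  congr (Node _ r Leaf).
  by have := IHl bl tl; rewrite /NF /= catA foldr_cat.
rewrite foldr_right; last by rewrite all_reading.
by rewrite -/(NF (reading rr)) IHr.
Qed.

Fixpoint tsize {n} (t : btree n) : nat :=
  match t with Leaf => 0 | Node l _ rr => (tsize l + tsize rr).+1 end.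

Lemma ins2_size n (x : 'I_n) t : ins2 x t = t \/ tsize (ins2 x t) = (tsize t).+1.
Proof.
elim: t => [|l IHl r rr IHr] /=; first by right.
case: ifP => _.
  case: ifP => _; first by left.
  by case: IHl => [->|/= ->]; [left|right; rewrite addSn].
by case: IHr => [->|/= ->]; [left|right; rewrite addnS].
Qed.

Lemma foldr_fix n (t : btree n) w : foldr ins2 t w = t -> forall x, x \in w -> ins2 x t = t.
Proof.
suff: tsize t <= tsize (foldr ins2 t w) /\
  (tsize (foldr ins2 t w) = tsize t -> foldr ins2 t w = t /\ forall x, x \in w -> ins2 x t = t).
  by case=> _ h e; case: (h (congr1 tsize e)).
elim: w => [|y w [IH1 IH2]] /=; first by split=> // _; split.
case: (ins2_size y (foldr ins2 t w)) => [e0|e0]; rewrite e0.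
  split => // e; case: (IH2 e) => e1 h; split=> // x; rewrite inE.
  by case/orP => [/eqP -> | /h //]; rewrite -e1 e0.
split; first by apply: leqW.
by move=> e; move: IH1; rewrite -e ltnn.
Qed.

Lemma foldr_fixed n (t : btree n) w : (forall x, x \in w -> ins2 x t = t) -> foldr ins2 t w = t.
Proof.
elim: w => //= y w IH h; rewrite IH ?h ?inE ?eqxx //.
by move=> x hx; apply: h; rewrite inE hx orbT.
Qed.

Definition Qs n (L : seq ('I_n * nat * bool)) (x : 'I_n) : Prop :=
  forall d b, (x, d, b) \in L -> (forall d' b', (x, d', b') \in L -> d' <= d) -> b = true.

Lemma dnl_Qs n (t : btree n) : deepest_no_left t <-> forall x, Qs (nodes_info t 0) x.
Proof.
split.
  move=> h x d b hin hmax; apply: (h x d b hin) => x' d' b' hin' ex.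
  by subst x'; apply: hmax hin'.
move=> h x d b hin hmax; apply: (h x d b hin) => d' b' hin'.
exact: hmax hin' erefl.
Qed.

Lemma Qs_ext n (L1 L2 : seq ('I_n * nat * bool)) x :
  (forall d b, ((x, d, b) \in L1) = ((x, d, b) \in L2)) -> (Qs L1 x <-> Qs L2 x).
Proof.
move=> e; split=> h d b.
  by rewrite -e => hin hmax; apply: h hin _ => d' b'; rewrite e; apply: hmax.
by rewrite e => hin hmax; apply: h hin _ => d' b'; rewrite -e; apply: hmax.
Qed.

Lemma nodes_info_mem n (t : btree n) d y dd b :
  (y, dd, b) \in nodes_info t d -> (y \in labels t) && (d <= dd).
Proof.
elim: t d => [|l IHl r rr IHr] d //=.
rewrite inE mem_cat => /orP[/eqP [-> -> _]|/orP[/IHl|/IHr] /andP[hy hd]].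
- by rewrite mem_cat inE eqxx orbT leqnn.
- by rewrite mem_cat hy ltnW.
- by rewrite mem_cat inE hy !orbT ltnW.
Qed.

Lemma nodes_info_ex n (t : btree n) d y : y \in labels t -> exists dd b, (y, dd, b) \in nodes_info t d.
Proof.
elim: t d => [|l IHl r rr IHr] d //=.
rewrite mem_cat inE => /orP[/(IHl d.+1)|/orP[/eqP ->|/(IHr d.+1)]].
- by case=> dd [b h]; exists dd, b; rewrite inE mem_cat h orbT.
- by exists d, (if l is Leaf then true else false); rewrite inE eqxx.
- by case=> dd [b h]; exists dd, b; rewrite inE mem_cat h !orbT.
Qed.

Lemma Node_inj n (l l' rr rr' : btree n) r : (Node l r rr = Node l' r rr') <-> (l = l' /\ rr = rr').
Proof. by split; [case=> -> -> | case=> -> ->]. Qed.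

Lemma Qs_ins2 n (t : btree n) : is_bst t -> forall x d, x \in labels t ->
  (Qs (nodes_info t d) x <-> ins2 x t = t).
Proof.
elim: t => [|l IHl r rr IHr] //= /and4P[hl hr bl br] x d.
have nl : forall dd b, (x, dd, b) \in nodes_info l d.+1 -> x <= r.
  by move=> dd b /nodes_info_mem /andP[h _]; move/allP: hl; apply.
have nr : forall dd b, (x, dd, b) \in nodes_info rr d.+1 -> r < x.
  by move=> dd b /nodes_info_mem /andP[h _]; move/allP: hr; apply.
rewrite mem_cat inE.
case: (ltngtP r x) => hrx.
- move=> hx.
  have hx' : x \in labels rr.
    case/or3P: hx => [hx|/eqP exr|//].
      by move/allP: hl => /(_ x hx); rewrite leqNgt hrx.
    by move: hrx; rewrite exr ltnn.
  have E : forall dd b, ((x, dd, b) \in (r, d, if l is Leaf then true else false)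
      :: nodes_info l d.+1 ++ nodes_info rr d.+1) = ((x, dd, b) \in nodes_info rr d.+1).
    move=> dd b; rewrite inE mem_cat !xpair_eqE.
    have -> : (x == r) = false by apply/negbTE; rewrite neq_ltn hrx orbT.
    case hin : ((x, dd, b) \in nodes_info l d.+1) => //.
    by have := nl _ _ hin; rewrite leqNgt hrx.
  apply: (iff_trans (Qs_ext E)); apply: (iff_trans (IHr br x d.+1 hx')).
  by split=> [->|[]].
- move=> hx.
  have hx' : x \in labels l.
    case/or3P: hx => [//|/eqP exr|hx].
      by move: hrx; rewrite exr ltnn.
    by move/allP: hr => /(_ x hx); rewrite ltnNge ltnW.
  have E : forall dd b, ((x, dd, b) \in (r, d, if l is Leaf then true else false)
      :: nodes_info l d.+1 ++ nodes_info rr d.+1) = ((x, dd, b) \in nodes_info l d.+1).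
    move=> dd b; rewrite inE mem_cat !xpair_eqE.
    have -> : (x == r) = false by apply/negbTE; rewrite neq_ltn hrx.
    case hin : ((x, dd, b) \in nodes_info rr d.+1); rewrite ?orbF //.
    by have := nr _ _ hin; rewrite ltnNge ltnW.
  apply: (iff_trans (Qs_ext E)); apply: (iff_trans (IHl bl x d.+1 hx')).
  have -> : (x == r) = false by apply/negbTE; rewrite neq_ltn hrx.
  by split=> [->|[]].
- have exr : x = r by apply: val_inj. subst x => _.
  rewrite eqxx /=.
  have nr' : forall dd b, ((r, dd, b) \in nodes_info rr d.+1) = false.
    by move=> dd b; apply/negbTE/negP => /nr; rewrite ltnn.
  case hrl : (r \in labels l).
    have hl0 : (match l with Leaf => true | Node _ _ _ => false end) = false.
      by move: hrl; case: (l).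
    rewrite hl0.
    apply: iff_trans (iff_trans (IHl bl r d.+1 hrl) _); last by split=> [->|[]].
    split.
    - move=> h dd b hin hmax; apply: (h dd b); first by rewrite inE mem_cat hin orbT.
      move=> d' b'; rewrite inE mem_cat nr' orbF !xpair_eqE eqxx /=.
      case/orP => [/andP[/eqP -> _]|/hmax //].
      by have /andP[_ hh] := nodes_info_mem hin; apply: ltnW.
    - move=> h dd b; rewrite inE mem_cat nr' orbF !xpair_eqE eqxx /=.
      case/orP => [/andP[/eqP -> _]|hin] hmax.
        have [dd' [b' hin']] := nodes_info_ex d.+1 hrl.
        have := hmax dd' b'; rewrite inE mem_cat hin' orbT => /(_ isT).
        by have /andP[_ hd] := nodes_info_mem hin'; rewrite leqNgt hd.
      apply: h hin _ => d' b' hin'; apply: (hmax d' b'); by rewrite inE mem_cat hin' orbT.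
  have nl' : forall dd b, ((r, dd, b) \in nodes_info l d.+1) = false.
    by move=> dd b; apply/negbTE/negP => /nodes_info_mem; rewrite hrl.
  have E : forall dd b, ((r, dd, b) \in (r, d, if l is Leaf then true else false)
      :: nodes_info l d.+1 ++ nodes_info rr d.+1) = (dd == d) && (b == if l is Leaf then true else false).
    by move=> dd b; rewrite inE mem_cat nl' nr' !orbF !xpair_eqE eqxx.
  case: l {IHl hl bl nl nl' E} (E) hrl => [|l1 y l2] E hrl.
    split=> // _ dd b; rewrite E => /andP[_ /eqP ->] //.
  split; last first.
    case=> e; have e' : ins2 r (Node l1 y l2) = Node l1 y l2 by [].
    have := mem_labels_ins2 r r (Node l1 y l2).
    by rewrite e' eqxx hrl.
  move=> h; suff: false = true by [].
  apply: (h d false); first by rewrite E !eqxx.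
  by move=> d' b'; rewrite E => /andP[/eqP -> _].
Qed.

Lemma dnl_ins2 n (t : btree n) : is_bst t ->
  deepest_no_left t <-> (forall x, x \in labels t -> ins2 x t = t).
Proof.
move=> bt; apply: iff_trans (dnl_Qs t) _.
split=> h x.
  by move=> hx; apply: (Qs_ins2 bt 0 hx).1 (h x).
case hx : (x \in labels t); first by apply: (Qs_ins2 bt 0 hx).2; apply: h.
by move=> d b /nodes_info_mem; rewrite hx.
Qed.

Lemma idem_NF n (w : seq 'I_n) :
  sylv2_idempotent w <-> (forall x, x \in labels (NF w) -> ins2 x (NF w) = NF w).
Proof.
split.
  move=> /sylv2_NF; rewrite NF_cat => /foldr_fix h x; rewrite mem_NF; exact: h.
move=> h; apply: NF_eq_sylv2; rewrite NF_cat; apply: foldr_fixed => x hx.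
by apply: h; rewrite mem_NF.
Qed.

Lemma char_idem n (w : seq 'I_n) :
  sylv2_idempotent w <->
      exists t : btree n,
        [/\ is_bst t, two_reduced t, deepest_no_left t & sylv2 w (reading t)].
Proof.
split.
  move=> /idem_NF h; exists (NF w); split.
  - exact: NF_bst.
  - exact: NF_tred.
  - by apply/dnl_ins2 => //; apply: NF_bst.
  - exact: sylv2_NFr.
case=> t [bt tt dt hw]; apply/idem_NF.
have -> : NF w = t by rewrite (sylv2_NF hw) NF_reading.
by apply/dnl_ins2.
Qed.

Fixpoint validr {n} (t : btree n) : bool :=
  match t with
  | Leaf => true
  | Node l r rr =>
      [&& all (fun x : 'I_n => x <= r) (labels l), all (fun x : 'I_n => r < x) (labels rr),
          (if l is Node _ y _ then (y != r) && (r \in labels l) else true),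
          validr l & validr rr]
  end.

Lemma ins2_right n (x r : 'I_n) l rr : r < x -> ins2 x (Node l r rr) = Node l r (ins2 x rr).
Proof. by move=> h /=; rewrite leqNgt h. Qed.

Lemma ins2_lt n (x r : 'I_n) l rr : x < r -> ins2 x (Node l r rr) = Node (ins2 x l) r rr.
Proof.
move=> h /=; rewrite ltnW //.
by have -> : (x == r) = false by apply/negbTE; rewrite neq_ltn h.
Qed.

Lemma labels_node n (l : btree n) (r : 'I_n) : (r \in labels l) -> isnode l.
Proof. by case: l. Qed.

Lemma validrP n (t : btree n) :
  validr t <-> [/\ is_bst t, two_reduced t & forall x, x \in labels t -> ins2 x t = t].
Proof.
elim: t => [|l IHl r rr IHr]; first by split.
rewrite [validr (Node _ _ _)]/= [is_bst (Node _ _ _)]/= [two_reduced (Node _ _ _)]/= [labels (Node _ _ _)]/=.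
split.
  case/and5P=> hl hr hc vl vr.
  have [bl tl fl] := IHl.1 vl; have [br tr fr] := IHr.1 vr.
  split.
  - by rewrite hl hr bl br.
  - rewrite tl tr andbT; by case: (l) hc => // l1 y l2 /andP[-> _].
  move=> x; rewrite mem_cat inE => /or3P[hx|/eqP ->|hx].
  - have hxr : x <= r by move/allP: hl; apply.
    by rewrite ins2_node_left ?(labels_node hx) // fl.
  - move: hc; case: (l) fl => [|l1 y l2] fl; first by rewrite /= leqnn eqxx.
    case/andP=> _ hrl.
    by rewrite ins2_node_left // fl.
  - have hxr : r < x by move/allP: hr; apply.
    by rewrite ins2_right // fr.
case=> /and4P[hl hr bl br] /and3P[hc tl tr] fx.
apply/and5P; split => //.
- case: (l) hc fx => // l1 y l2 -> fx /=.
  have := fx r; rewrite mem_cat inE eqxx orbT => /(_ isT).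
  rewrite ins2_node_left // => -[] e.
  have e' : ins2 r (Node l1 y l2) = Node l1 y l2 by [].
  by have := mem_labels_ins2 r r (Node l1 y l2); rewrite e' eqxx.
- apply/IHl; split => // x hx.
  have hxr : x <= r by move/allP: hl; apply.
  have := fx x; rewrite mem_cat hx => /(_ isT).
  by rewrite ins2_node_left ?(labels_node hx) // => -[].
- apply/IHr; split => // x hx.
  have hxr : r < x by move/allP: hr; apply.
  have := fx x; rewrite mem_cat inE hx !orbT => /(_ isT).
  by rewrite ins2_right // => -[].
Qed.

Definition ltI {n} : rel 'I_n := fun x y => x < y.

Lemma ltI_trans n : transitive (@ltI n).
Proof. by move=> y x z; apply: ltn_trans. Qed.

Lemma ltI_irr n : irreflexive (@ltI n).
Proof. by move=> x; rewrite /ltI ltnn. Qed.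

Definition mkA {n} (g : seq 'I_n -> seq (btree n)) (Z : seq 'I_n) :=
  if size Z <= 1 then [:: Leaf] else g Z.

Definition mkF {n} (g : seq 'I_n -> seq (btree n)) (Z : seq 'I_n) :=
  if Z is z :: Z' then [seq Node l (last z Z') Leaf | l <- mkA g Z] ++ g Z else [:: Leaf].

Definition lowr {n} (Z : seq 'I_n) (r : 'I_n) := filter (fun x : 'I_n => x <= r) Z.
Definition highr {n} (Z : seq 'I_n) (r : 'I_n) := filter (fun x : 'I_n => r < x) Z.
Definition hasgt {n} (Z : seq 'I_n) (r : 'I_n) := has (fun x : 'I_n => r < x) Z.

Fixpoint eG {n} (k : nat) (Z : seq 'I_n) : seq (btree n) :=
  if k is k'.+1 then
    flatten (map (fun r : 'I_n =>
       allpairs (fun l rr => Node l r rr) (mkA (eG k') (lowr Z r)) (mkF (eG k') (highr Z r)))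
       (filter (hasgt Z) Z))
  else [::].

Definition rootc {n} (Z : seq 'I_n) (t : btree n) :=
  if t is Node _ r _ then hasgt Z r else false.

Definition memG n k (Z : seq 'I_n) := forall t,
  t \in eG k Z <-> [/\ validr t, labels t =i Z & rootc Z t].

Lemma decomp n (Z : seq 'I_n) l r rr :
  validr (Node l r rr) /\ labels (Node l r rr) =i Z <->
  [/\ r \in Z, validr (Node l r Leaf) /\ labels (Node l r Leaf) =i lowr Z r
             & validr rr /\ labels rr =i highr Z r].
Proof.
rewrite /=; split.
  case=> /and5P[hl hr hc vl vr] e; split.
  - by rewrite -e mem_cat inE eqxx orbT.
  - split; first by rewrite hl hc vl.
    move=> x; rewrite mem_filter -e !mem_cat !inE.
    case: (leqP x r) => hxr /=.
      case hx : (x \in labels rr); last by rewrite !orbF.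
      by move/allP: hr => /(_ x hx); rewrite ltnNge hxr.
    apply/negbTE; apply/orP => -[hx|/eqP exr].
      by move/allP: hl => /(_ x hx); rewrite leqNgt hxr.
    by move: hxr; rewrite exr ltnn.
  - split => // x; rewrite mem_filter -e !mem_cat !inE.
    case: (ltnP r x) => hxr /=.
      case hx : (x \in labels rr); first by rewrite !orbT.
      rewrite orbF; symmetry; apply/negbTE/orP => -[hx'|/eqP exr].
        by move/allP: hl => /(_ x hx'); rewrite leqNgt hxr.
      by move: hxr; rewrite exr ltnn.
    apply/negbTE/negP => hx; move/allP: hr => /(_ x hx); by rewrite ltnNge hxr.
case=> hrZ [vL el] [vr er]; move: vL; rewrite [validr _]/= => /and4P[hl hc vl _]; split.
  rewrite hl hc vl vr /= andbT.
  apply/allP => x; rewrite er mem_filter; by case/andP.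
move=> x; rewrite mem_cat inE er.
have := el x; rewrite /= mem_cat inE mem_filter orbA => ->.
rewrite mem_filter.
by case: (leqP x r) => hxr /=; rewrite ?orbF.
Qed.

Lemma sorted_last_max n (z : 'I_n) Z' : sorted ltI (z :: Z') ->
  forall x, x \in z :: Z' -> x <= last z Z'.
Proof.
elim: Z' z => [|y Z' IH] z /=; first by move=> _ x; rewrite inE => /eqP ->.
case/andP=> hzy hp x; rewrite inE => /orP[/eqP ->|hx].
  apply: leq_trans (ltnW hzy) _; apply: IH => //; by rewrite inE eqxx.
exact: IH.
Qed.

Lemma memA_of_G n k (Z : seq 'I_n) z : sorted ltI Z -> z \in Z ->
  (forall x, x \in Z -> x <= z) -> memG k Z ->
  forall t, t \in mkA (eG k) Z <-> validr (Node t z Leaf) /\ labels (Node t z Leaf) =i Z.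
Proof.
move=> sZ hz hmax hG t; rewrite /mkA.
case: ifP => hsz.
  have eZ : Z = [:: z].
    by case: Z hz hsz {sZ hmax hG} => [|a [|b Z]] //; rewrite inE => /eqP ->.
  rewrite eZ inE; split.
    by move/eqP => -> /=; split => // x.
  case: t => [|l y rr] //= [/and4P[_ /andP[hyz hzl] _ _] e].
  have : y \in [:: z] by rewrite -e !mem_cat !inE eqxx !orbT.
  by rewrite inE => /eqP eyz; rewrite eyz eqxx in hyz.
apply: iff_trans (hG t) _; split.
  case=> vt et; case: t vt et => [|l y rr] //= vt et hy.
  have hyz : y <= z by apply: hmax; rewrite -et mem_cat inE eqxx orbT.
  split.
    rewrite vt andbT.
    have -> : all (fun x : 'I_n => x <= z) (labels l ++ y :: labels rr).
      by apply/allP => x; rewrite et; apply: hmax.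
    rewrite /= andbT et hz andbT.
    case/hasP: hy => x hx hyx.
    by rewrite neq_ltn (leq_trans hyx (hmax x hx)).
  move=> x; rewrite mem_cat inE et.
  by case: (x =P z) => [->|_]; rewrite ?hz ?orbF ?orbT.
rewrite [validr _]/= => -[/and4P[hall hc vt _] e].
have hzt : z \in labels t.
  move: hc e; case: (t) => [|l y rr]; last by case/andP.
  move=> _ e; move: hsz; have : uniq Z by apply: sorted_uniq sZ; [apply: ltI_trans|apply: ltI_irr].
  move=> uZ; have : size Z <= size [:: z].
    by apply: uniq_leq_size => // x; rewrite -e.
  by move=> /= ->.
have et : labels t =i Z.
  move=> x; rewrite -e mem_cat inE.
  by case: (x =P z) => [->|_]; rewrite ?hzt ?orbF.
case: t hall hc vt e hzt et => [|l y rr] // hall /andP[hyz hzl] vt e hzt et.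
split => //.
rewrite /rootc /hasgt; apply/hasP; exists z => //.
have : y <= z by move/allP: hall; apply; rewrite /= mem_cat inE eqxx orbT.
rewrite leq_eqVlt => /orP[/eqP eyz|//]; by rewrite (ord_inj eyz) eqxx in hyz.
Qed.

Lemma size_filter_lt (T : eqType) (p : pred T) s x : x \in s -> ~~ p x -> size (filter p s) < size s.
Proof.
move=> hx hp; rewrite size_filter -[X in _ < X](count_predC p s).
rewrite -{1}[count p s]addn0 ltn_add2l -has_count; apply/hasP; exists x => //.
Qed.

Lemma memF_of_G n k (Z : seq 'I_n) : sorted ltI Z -> memG k Z ->
  forall t, t \in mkF (eG k) Z <-> validr t /\ labels t =i Z.
Proof.
case: Z => [|z Z'] sZ hG t /=.
  rewrite inE; split; first by move/eqP ->.
  case: t => [|l r rr] // [_ e]; have := e r; by rewrite mem_cat inE eqxx orbT.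
have hm : last z Z' \in z :: Z' by apply: mem_last.
have hmax := sorted_last_max sZ.
rewrite mem_cat; split.
  case/orP => [/mapP [l hl ->]| /(hG t).1 [vt et _] //].
  exact: (memA_of_G sZ hm hmax hG l).1 hl.
case=> vt et; case: t vt et => [|l r rr] vt et.
  by have := et z; rewrite inE eqxx.
have hrZ : r \in z :: Z' by rewrite -et mem_cat inE eqxx orbT.
case hh: (hasgt (z :: Z') r).
  by apply/orP; right; apply/(hG _).2; split.
apply/orP; left.
have erm : r = last z Z'.
  apply: ord_inj; apply/eqP; rewrite eqn_leq hmax //=.
  rewrite leqNgt; apply/negP => hlt; move/negbT: hh => /hasPn /(_ _ hm).
  by rewrite hlt.
have err : rr = Leaf.
  case: rr vt et => // l2 y r2 vt et.
  have hy : y \in z :: Z' by rewrite -et mem_cat inE !mem_cat inE eqxx !orbT.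
  move: vt => /= /and5P[_ hr _ _ _].
  have : r < y by move/allP: hr; apply; rewrite mem_cat inE eqxx orbT.
  by move=> hry; move/negbT: hh => /hasPn /(_ _ hy); rewrite hry.
subst rr; rewrite -erm; apply/mapP; exists l => //.
apply/(memA_of_G sZ hm hmax hG l).2; by rewrite -erm.
Qed.

Lemma memG_all n k (Z : seq 'I_n) : sorted ltI Z -> size Z <= k -> memG k Z.
Proof.
elim: k Z => [|k IH] Z sZ hsz t.
  case: Z sZ hsz => // _ _; split => //; by case=> _ _; case: t.
have sL : forall r, sorted ltI (lowr Z r) by move=> r; apply: sorted_filter => //; apply: ltI_trans.
have sH : forall r, sorted ltI (highr Z r) by move=> r; apply: sorted_filter => //; apply: ltI_trans.
have GL : forall r, hasgt Z r -> memG k (lowr Z r).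
  move=> r /hasP [x hx hrx]; apply: IH => //.
  rewrite -ltnS; apply: leq_trans hsz; apply: (size_filter_lt hx).
  by rewrite -ltnNge.
have GH : forall r, r \in Z -> memG k (highr Z r).
  move=> r hr; apply: IH => //.
  rewrite -ltnS; apply: leq_trans hsz; apply: (size_filter_lt hr).
  by rewrite ltnn.
have AL : forall r, r \in Z -> hasgt Z r -> forall l,
    l \in mkA (eG k) (lowr Z r) <-> validr (Node l r Leaf) /\ labels (Node l r Leaf) =i lowr Z r.
  move=> r hr hg l; apply: memA_of_G; first exact: sL.
  - by rewrite /lowr mem_filter leqnn.
  - by move=> x; rewrite /lowr mem_filter => /andP[].
  - exact: GL.
have FH : forall r, r \in Z -> forall rr,
    rr \in mkF (eG k) (highr Z r) <-> validr rr /\ labels rr =i highr Z r.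
  by move=> r hr rr; apply: memF_of_G; [exact: sH | exact: GH].
split.
  move/flattenP => [s /mapP [r hr ->] ht]; move: hr; rewrite mem_filter => /andP [hg hrZ].
  move/allpairsP: ht => [[l rr] [/= hl hrr ->]].
  have [vL eL] := (AL r hrZ hg l).1 hl.
  have [vR eR] := (FH r hrZ rr).1 hrr.
  have [vt et] := (decomp Z l r rr).2 (And3 hrZ (conj vL eL) (conj vR eR)).
  by split.
case=> vt et; case: t vt et => [|l r rr] // vt et hg.
have [hrZ [vL eL] [vR eR]] := (decomp Z l r rr).1 (conj vt et).
apply/flattenP; eexists.
  apply/mapP; exists r; first by rewrite mem_filter hrZ andbT; exact: hg.
  reflexivity.
apply: (allpairs_f (fun l rr => Node l r rr)).
  by apply/(AL r hrZ hg l).2.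
by apply/(FH r hrZ rr).2.
Qed.


Lemma uniq_flatten_map (T U : eqType) (f : T -> seq U) s : uniq s ->
  (forall x, x \in s -> uniq (f x)) ->
  (forall x y u, x \in s -> y \in s -> u \in f x -> u \in f y -> x = y) ->
  uniq (flatten (map f s)).
Proof.
elim: s => //= x s IH /andP[hx us] hu hd.
rewrite cat_uniq hu ?inE ?eqxx //= IH //; last first.
- by move=> a b u ha hb; apply: hd; rewrite inE ?ha ?hb orbT.
- by move=> a ha; apply: hu; rewrite inE ha orbT.
rewrite andbT; apply/hasPn => u /flattenP [s' /mapP [y hy ->] huy].
apply/negP => hux.
have exy : x = y by apply: (hd x y u) => //; rewrite inE ?eqxx ?hy ?orbT.
by move: hx; rewrite exy hy.
Qed.

Lemma sorted_uniqI n (Z : seq 'I_n) : sorted ltI Z -> uniq Z.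
Proof. by apply: sorted_uniq; [apply: ltI_trans|apply: ltI_irr]. Qed.

Lemma uniq_mkF n k (Z : seq 'I_n) : sorted ltI Z -> size Z <= k ->
  uniq (eG k Z) -> uniq (mkF (eG k) Z).
Proof.
case: Z => [|z Z'] // sZ hsz uG /=.
have hG := memG_all sZ hsz.
have hmax := sorted_last_max sZ.
rewrite cat_uniq uG andbT; apply/andP; split.
  rewrite map_inj_uniq; last by move=> a b [].
  by rewrite /mkA; case: ifP.
apply/hasPn => t /(hG t).1 [_ _]; case: t => // l r rr hg.
apply/negP => /mapP [l' _ [_ er _]].
move: hg; rewrite /rootc /hasgt => /hasP [x hx]; rewrite er ltnNge.
by rewrite hmax.
Qed.

Lemma uniq_eG n k (Z : seq 'I_n) : sorted ltI Z -> size Z <= k -> uniq (eG k Z).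
Proof.
elim: k Z => [|k IH] Z sZ hsz //=.
apply: uniq_flatten_map.
- by apply: filter_uniq; apply: sorted_uniqI.
- move=> r; rewrite mem_filter => /andP[hg hr].
  have sL : sorted ltI (lowr Z r) by apply: sorted_filter => //; apply: ltI_trans.
  have sH : sorted ltI (highr Z r) by apply: sorted_filter => //; apply: ltI_trans.
  have zL : size (lowr Z r) <= k.
    case/hasP: hg => x hx hrx.
    rewrite -ltnS; apply: leq_trans hsz; apply: (size_filter_lt hx).
    by rewrite -ltnNge.
  have zH : size (highr Z r) <= k.
    rewrite -ltnS; apply: leq_trans hsz; apply: (size_filter_lt hr).
    by rewrite ltnn.
  apply: allpairs_uniq.
  + by rewrite /mkA; case: ifP => // _; apply: IH.
  + by apply: uniq_mkF => //; apply: IH.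
  + by move=> [a b] [c d] _ _ /= [-> ->].
- move=> x y u _ _ /allpairsP [[a b] [_ _ ->]] /allpairsP [[c d] [_ _ [_ ->]]] //.
Qed.

Lemma schroder_size m : size (schroder_upto m) = m.+1.
Proof. by elim: m => //= m IH; rewrite size_rcons IH. Qed.

Lemma schroder_nth m k : k <= m -> nth 0 (schroder_upto m) k = large_schroder k.
Proof.
elim: m k => [|m IH] k; first by rewrite leqn0 => /eqP ->.
rewrite leq_eqVlt => /orP[/eqP ->|hk]; first by [].
rewrite /= nth_rcons schroder_size hk; exact: IH.
Qed.

Lemma schroder_rec m : large_schroder m.+1 =
  large_schroder m + \sum_(k < m.+1) large_schroder k * large_schroder (m - k).
Proof.
rewrite {1}/large_schroder /= nth_rcons schroder_size ltnn eqxx.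
rewrite -nth_last schroder_size /= schroder_nth //.
congr (_ + _); rewrite sumnE big_map.
rewrite -(big_mkord xpredT (fun k => large_schroder k * large_schroder (m - k))) big_ltn //.
congr (_ + _); first by rewrite !schroder_nth ?leq_subr.
rewrite /index_iota subSS subn0; apply: eq_big_seq => j; rewrite mem_iota => /andP[_ hj].
by rewrite !schroder_nth ?leq_subr // -ltnS -add1n.
Qed.

Lemma S_rec m : S_shift m.+2 = \sum_(j < m.+1) (S_shift j.+1 + (nat_of_ord j == 0)) * S_shift (m.+1 - j).
Proof.
rewrite /= schroder_rec.
rewrite (eq_bigr (fun j : 'I_m.+1 => S_shift j.+1 * S_shift (m.+1 - j) + (nat_of_ord j == 0) * S_shift (m.+1 - j)));
  last by move=> j _; rewrite mulnDl.
rewrite big_split /= addnC; congr (_ + _).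
  apply: eq_bigr => j _ /=; rewrite subSn; last by rewrite -ltnS.
  by [].
rewrite big_ord_recl big1 ?addn0 // subn0 mul1n //.
Qed.

Lemma sum_split n (Z : seq 'I_n) (phi : nat -> nat -> nat) : sorted ltI Z ->
  \sum_(r <- Z) phi (size (lowr Z r)) (size (highr Z r)) =
  \sum_(j < size Z) phi j.+1 ((size Z).-1 - j).
Proof.
elim: Z phi => [|z Z IH] phi; first by rewrite big_nil big_ord0.
move=> sZ; have pZ : all (ltI z) Z by apply: order_path_min => //; apply: ltI_trans.
have sZ' : sorted ltI Z by apply: path_sorted sZ.
rewrite big_cons big_ord_recl.
have L1 : size (lowr (z :: Z) z) = 1.
  rewrite /lowr [filter _ _]/= leqnn [size _]/=.
  rewrite (@eq_in_filter _ (fun x : 'I_n => x <= z) pred0 Z) ?filter_pred0 //.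
  move=> x hx /=; move/allP: pZ => /(_ x hx); rewrite /ltI => h.
  by rewrite leqNgt h.
have H1 : highr (z :: Z) z = Z.
  rewrite /highr [filter _ _]/= ltnn; apply/all_filterP; exact: pZ.
rewrite L1 H1 subn0; congr (_ + _).
rewrite (eq_big_seq (fun r => phi (size (lowr Z r)).+1 (size (highr Z r)))); last first.
  move=> r hr; move/allP: pZ => /(_ r hr); rewrite /ltI => h.
  rewrite /lowr /highr [filter _ (z :: Z)]/= [filter _ (z :: Z)]/= (ltnW h) ltnNge (ltnW h) /=.
  by [].
rewrite (IH (fun i j => phi i.+1 j)) //.
apply: eq_bigr => j _. change (phi j.+2 ((size Z).-1 - j) = phi j.+2 (size Z - j.+1)); congr (phi _ _).
by rewrite subnS -subn1 subnAC subn1.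
Qed.


Lemma size_flatten_map (T U : Type) (f : T -> seq U) s :
  size (flatten (map f s)) = \sum_(x <- s) size (f x).
Proof. by rewrite size_flatten sumnE /shape -map_comp big_map. Qed.

Lemma size_enum n m : forall k (Z : seq 'I_n), sorted ltI Z -> size Z = m -> m <= k ->
  size (mkF (eG k) Z) = S_shift m /\ (0 < m -> (size (eG k Z)).*2 + (m == 1) = S_shift m).
Proof.
elim/ltn_ind: m => m IH k Z sZ hZ hk.
have HG : 0 < m -> (size (eG k Z)).*2 + (m == 1) = S_shift m.
  move=> hm; case: k hk => [|k] hk; first by move: (leq_trans hm hk).
  rewrite /= size_flatten_map big_filter big_mkcond /= -mul2n big_distrr /=.
  pose phi i j := if j == 0 then 0 else (S_shift i + (i == 1)) * S_shift j.
  rewrite (eq_big_seq (fun r => phi (size (lowr Z r)) (size (highr Z r)))); last first.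
    move=> r hr; rewrite /phi.
    have hgt : hasgt Z r = (0 < size (highr Z r)) by rewrite /hasgt has_count size_filter.
    rewrite hgt; case: ifP => hpos; last by rewrite muln0; move: hpos; rewrite lt0n => /negbFE ->.
    rewrite (negbTE (lt0n_neq0 hpos)) size_allpairs mulnA.
    have hsum : size (lowr Z r) + size (highr Z r) = m.
      rewrite -hZ /lowr /highr !size_filter -(count_predC (fun x : 'I_n => x <= r) Z).
      congr (_ + _); apply: eq_count => x /=; by rewrite ltnNge.
    have hL1 : 0 < size (lowr Z r) by rewrite lt0n size_eq0; apply/eqP => e;
      have := mem_filter (fun x : 'I_n => x <= r) r Z; rewrite -/(lowr Z r) e in_nil leqnn hr.
    have hLm : size (lowr Z r) < m by rewrite -hsum -{1}(addn0 (size (lowr Z r))) ltn_add2l.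
    have hHm : size (highr Z r) < m by rewrite -hsum -{1}(add0n (size (highr Z r))) ltn_add2r.
    have sL : sorted ltI (lowr Z r) by apply: sorted_filter => //; apply: ltI_trans.
    have sH : sorted ltI (highr Z r) by apply: sorted_filter => //; apply: ltI_trans.
    have kH : size (highr Z r) <= k by rewrite -ltnS; apply: leq_trans hHm hk.
    have kL : size (lowr Z r) <= k by rewrite -ltnS; apply: leq_trans hLm hk.
    have [FH _] := IH _ hHm k _ sH erefl kH.
    have [_ GL] := IH _ hLm k _ sL erefl kL.
    rewrite FH; congr (_ * _).
    rewrite /mkA; case: ifP => hs.
      have e1 : size (lowr Z r) = 1 by apply/eqP; rewrite eqn_leq hs hL1.
      by rewrite e1.
    rewrite -(GL hL1) mul2n.
    have -> : (size (lowr Z r) == 1) = false by apply/negbTE; move: hs; apply: contraFN => /eqP ->.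
    by rewrite /= !addn0.
  rewrite (sum_split phi sZ) hZ.
  case: m hm {IH hZ hk} => [|[|M]] // _.
    by rewrite big_ord1.
  rewrite big_ord_recr /= {2}/phi subnn eqxx !addn0 -[large_schroder _]/(S_shift M.+2) S_rec.
  apply: eq_bigr => j _; rewrite /phi.
  have -> : (M.+1 - j == 0) = false by rewrite subn_eq0 leqNgt ltn_ord.
  by [].
split => //.
case: Z sZ hZ HG => [|z Z'] sZ hZ HG; first by rewrite -hZ.
have hm : 0 < m by rewrite -hZ.
have := HG hm; rewrite [mkF _ _]/= size_cat size_map /mkA -hZ.
case: ifP => hs.
  have e1 : size (z :: Z') = 1 by apply/eqP; rewrite eqn_leq hs.
  rewrite e1 eqxx => /= h.
  have -> : size (eG k (z :: Z')) = 0.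
    by move: h; case: (size (eG k (z :: Z'))).
  by [].
have -> : (size (z :: Z') == 1) = false by apply/negbTE; move: hs; apply: contraFN => /eqP ->.
by rewrite addn0 -addnn.
Qed.

Fixpoint subs {T : Type} (s : seq T) : seq (seq T) :=
  if s is x :: s' then map (cons x) (subs s') ++ subs s' else [:: [::]].

Lemma sum_subs (T : Type) (s : seq T) (phi : nat -> nat) :
  \sum_(Y <- subs s) phi (size Y) = \sum_(0 <= k < (size s).+1) 'C(size s, k) * phi k.
Proof.
elim: s phi => [|x s IH] phi.
  by rewrite /= big_seq1 big_nat1 bin0 mul1n.
rewrite /= big_cat big_map /= (IH (fun k => phi k.+1)) IH.
set n := size s.
have R : \sum_(0 <= k < n.+2) 'C(n.+1, k) * phi k = phi 0 +
    \sum_(0 <= k < n.+1) 'C(n, k.+1) * phi k.+1 + \sum_(0 <= k < n.+1) 'C(n, k) * phi k.+1.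
  rewrite big_nat_recl // bin0 mul1n -addnA -big_split /=; congr (_ + _).
  by apply: eq_bigr => k _; rewrite binS mulnDl.
have B : \sum_(0 <= k < n.+1) 'C(n, k) * phi k = phi 0 +
    \sum_(0 <= k < n.+1) 'C(n, k.+1) * phi k.+1.
  rewrite big_nat_recl // bin0 mul1n; congr (_ + _).
  by rewrite [in RHS]big_nat_recr //= bin_small // mul0n addn0.
by rewrite R B addnC.
Qed.

Lemma subs_subseq (T : eqType) (s Y : seq T) : Y \in subs s -> subseq Y s.
Proof.
elim: s Y => [|x s IH] Y /=; first by rewrite inE => /eqP ->.
rewrite mem_cat => /orP[/mapP [Y' hY' ->]|hY].
  by rewrite /= eqxx; apply: IH.
by apply: subseq_trans (IH _ hY) (subseq_cons s x).
Qed.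

Lemma uniq_subs (T : eqType) (s : seq T) : uniq s -> uniq (subs s).
Proof.
elim: s => [|x s IH] //= /andP[hx us].
rewrite cat_uniq map_inj_uniq ?IH //; last by move=> a b [].
rewrite andbT /=; apply/hasPn => Y hY; apply/negP => /mapP [Y' _ eY].
have := mem_subseq (subs_subseq hY); rewrite eY => /(_ x).
by rewrite inE eqxx (negbTE hx) => /(_ isT).
Qed.

Lemma filter_in_subs (T : eqType) (p : pred T) (s : seq T) : filter p s \in subs s.
Proof.
elim: s => [|x s IH] /=; first by rewrite inE.
rewrite mem_cat; case: (p x); last by rewrite IH orbT.
by rewrite map_f.
Qed.

Lemma sorted_enum n : sorted ltI (enum 'I_n).
Proof. by have := iota_ltn_sorted 0 n; rewrite -val_enum_ord sorted_map. Qed.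

Definition allL n : seq (btree n) := flatten (map (mkF (eG n)) (subs (enum 'I_n))).

Lemma subs_sorted n Y : Y \in subs (enum 'I_n) -> sorted ltI Y /\ size Y <= n.
Proof.
move=> /subs_subseq h; split.
  by apply: subseq_sorted h (sorted_enum n); apply: ltI_trans.
by apply: leq_trans (size_subseq h) _; rewrite size_enum_ord.
Qed.

Lemma allL_mem n (t : btree n) : t \in allL n <-> validr t.
Proof.
split.
  move/flattenP => [s /mapP [Y hY ->] ht].
  have [sY zY] := subs_sorted hY.
  by case: ((memF_of_G sY (memG_all sY zY) t).1 ht).
move=> vt; apply/flattenP.
set Y := [seq x <- enum 'I_n | x \in labels t].
have hY : Y \in subs (enum 'I_n) by apply: filter_in_subs.
have [sY zY] := subs_sorted hY.
exists (mkF (eG n) Y); first by apply: map_f.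
apply/(memF_of_G sY (memG_all sY zY) t).2; split => // x.
by rewrite mem_filter mem_enum andbT.
Qed.

Lemma allL_uniq n : uniq (allL n).
Proof.
apply: uniq_flatten_map.
- by apply: uniq_subs; apply: enum_uniq.
- move=> Y hY; have [sY zY] := subs_sorted hY.
  by apply: uniq_mkF => //; apply: uniq_eG.
- move=> Y Y' t hY hY' ht ht'.
  have [sY zY] := subs_sorted hY; have [sY' zY'] := subs_sorted hY'.
  have [_ e] := (memF_of_G sY (memG_all sY zY) t).1 ht.
  have [_ e'] := (memF_of_G sY' (memG_all sY' zY') t).1 ht'.
  apply: (irr_sorted_eq (@ltI_trans n) (@ltI_irr n)) => // x.
  by rewrite -e -e'.
Qed.

Lemma allL_size n : size (allL n) = \sum_(0 <= k < n.+1) 'C(n, k) * S_shift k.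
Proof.
rewrite /allL size_flatten_map.
rewrite (eq_big_seq (fun Y => S_shift (size Y))); last first.
  move=> Y hY; have [sY zY] := subs_sorted hY.
  by case: (size_enum sY erefl zY).
by rewrite sum_subs size_enum_ord.
Qed.

Theorem mainTheorem7 (n : nat) :
  (exists s : seq (seq 'I_n),
      [/\ size s = \sum_(0 <= k < n.+1) 'C(n, k) * S_shift k,
          (forall w, w \in s -> sylv2_idempotent w),
          (forall i j, i < j < size s -> ~ sylv2 (nth [::] s i) (nth [::] s j)) &
          (forall w : seq 'I_n, sylv2_idempotent w -> exists2 u, u \in s & sylv2 w u)])
  /\
  (forall w : seq 'I_n,
      sylv2_idempotent w <->
      exists t : btree n,
        [/\ is_bst t, two_reduced t, deepest_no_left t & sylv2 w (reading t)]).
Proof.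
split; last by move=> w; apply: char_idem.
exists (map (@reading n) (allL n)); split.
- by rewrite size_map allL_size.
- move=> w /mapP [t ht ->].
  have [bt tt ft] := (validrP t).1 ((allL_mem t).1 ht).
  by apply/idem_NF; rewrite NF_reading.
- move=> i j /andP[hij hj] h; rewrite size_map in hj.
  have hi : i < size (allL n) by apply: ltn_trans hij hj.
  rewrite !(nth_map Leaf) // in h.
  have vi := (validrP _).1 ((allL_mem _).1 (mem_nth Leaf hi)).
  have vj := (validrP _).1 ((allL_mem _).1 (mem_nth Leaf hj)).
  case: vi => bi ti _; case: vj => bj tj _.
  have := sylv2_NF h; rewrite !NF_reading // => /eqP.
  rewrite nth_uniq //; last exact: allL_uniq.
  by move/eqP => eij; move: hij; rewrite eij ltnn.
- move=> w hw; exists (reading (NF w)); last exact: sylv2_NFr.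
  apply: map_f; apply/allL_mem; apply/validrP; split.
  + exact: NF_bst.
  + exact: NF_tred.
  + exact: (idem_NF w).1 hw.
Qed.
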